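(* In the setting below, there is a constant $C_1>0$ depending only on $K$ such that for each $f\in D_I$ and $i\in I$ there exist $g=\sum_{n\ge0}g_nt^n\in D_i'$ and $h=\sum_{n\ge0}h_nt^n\in D_i$ with $f=g+h$, $|g|_t\le|f|_t$ and $|h|_t\le|f|_t$; moreover, if $i=1$ then $\|h_n\|<C_1$ for all $n\ge0$, and if $i\ne1$ then $\|g_n\|<C_1$ for all $n\ge0$.
   Context: Let $K$ be a number field with ring of integers $R$; for $x\in K$ put $\|x\|=\max_{\sigma\in\operatorname{Hom}(K,\mathbb{C})}|\sigma(x)|$, and for a subring $S\subseteq K$ let $S\{t\}=\{\sum_{n\ge0}a_nt^n\in S[[t]]:\limsup_n\|a_n\|^{1/n}\le1\}$. Let $I$ be a finite index set containing the symbol $1$, and for each $i\in I$ let $a_i\in R$ be nonzero and not a unit, with $a_iR+a_jR=R$ for distinct $i,j\in I$. For $J\subseteq I$ let $a_J=\prod_{j\in J}a_j$ ($a_\emptyset=1$), $R_J=R[1/a_J]$, and $D_J=R_J\{t\}$ if $1\notin J$, $D_J=R_J[[t]]$ if $1\in J$; all are subrings of $D_I=R_I[[t]]$. For $i\in I$ put $D_i=D_{I\setminus\{i\}}$ and $D_i'=D_{\{i\}}$. $|\cdot|_t=e^{-v_t}$ is the $t$-adic absolute value on $R_I[[t]]$. *)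

(* Defs.v *)
From HB Require Import structures.
From mathcomp Require Import all_boot all_order all_algebra all_field.
Set Implicit Arguments. Unset Strict Implicit. Unset Printing Implicit Defensive.
Import Order.TTheory GRing.Theory Num.Theory.
Local Open Scope ring_scope.

(* A number field K is modelled as a finite-dimensional field extension of Q
   (K : fieldExtType rat).  Hom(K, C) is modelled as ring morphisms K -> algC
   (algC = algebraic closure of Q inside C, with the complex modulus `|_|). *)

Definition integral (K : fieldExtType rat) (x : K) : Prop :=
  exists p : {poly int}, p \is monic /\ root (map_poly (fun z : int => z%:~R : K) p) x.

Definition Runit (K : fieldExtType rat) (x : K) : Prop :=
  integral x /\ exists y : K, integral y /\ x * y = 1.

(* x lies in R[1/c] *)
Definition in_loc (K : fieldExtType rat) (c x : K) : Prop :=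
  exists n : nat, integral (c ^+ n * x).

(* ||x|| < C, where ||x|| = max over embeddings of |sigma x| *)
Definition normK_lt (K : fieldExtType rat) (x : K) (C : algC) : Prop :=
  forall s : {rmorphism K -> algC}, `|s x| < C.

(* limsup_n ||a_n||^(1/n) <= 1, unfolded:
   for every eps > 0, eventually ||a_n|| <= (1+eps)^n *)
Definition overconv (K : fieldExtType rat) (f : nat -> K) : Prop :=
  forall e : algC, 0 < e -> exists N : nat, forall n : nat, (N <= n)%N ->
    forall s : {rmorphism K -> algC}, `|s (f n)| <= (1 + e) ^+ n.

Definition aJ (K : fieldExtType rat) (I : finType) (a : I -> K) (J : {set I}) : K :=
  \prod_(j in J) a j.

(* f (a power series sum f_n t^n, given by its coefficients) lies in D_J *)
Definition inD (K : fieldExtType rat) (I : finType) (one : I) (a : I -> K)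
    (J : {set I}) (f : nat -> K) : Prop :=
  (forall n, in_loc (aJ a J) (f n)) /\ (one \notin J -> overconv f).

(* |g|_t <= |f|_t  (t-adic absolute value, |0|_t = 0) *)
Definition tle (K : fieldExtType rat) (g f : nat -> K) : Prop :=
  forall n : nat, (forall m : nat, (m <= n)%N -> f m = 0) -> g n = 0.

(* Main.v *)
Require Import Defs.
From HB Require Import structures.
From mathcomp Require Import all_boot all_order all_algebra all_field.
From mathcomp Require Import ring lra.
From Stdlib Require Import ClassicalEpsilon.
Import Order.TTheory GRing.Theory Num.Theory.
Local Open Scope ring_scope.

Section Integ.
Context {K : fieldExtType rat}.

Lemma integralE (x : K) :
  integral x <-> integralOver (intr : {rmorphism int -> K}) x.
Proof. by split=> [[p [mp rp]]|[p mp rp]]; exists p. Qed.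

Lemma int_add (x y : K) : integral x -> integral y -> integral (x + y).
Proof. by move=> /integralE hx /integralE hy; apply/integralE/integral_add. Qed.
Lemma int_mul (x y : K) : integral x -> integral y -> integral (x * y).
Proof. by move=> /integralE hx /integralE hy; apply/integralE/integral_mul. Qed.
Lemma int_sub (x y : K) : integral x -> integral y -> integral (x - y).
Proof. by move=> /integralE hx /integralE hy; apply/integralE/integral_sub. Qed.
Lemma int_int (z : int) : integral (z%:~R : K).
Proof. by apply/integralE; apply: (integral_id (intr : {rmorphism int -> K}) z). Qed.
Lemma int0 : integral (0 : K).
Proof. by have := int_int 0. Qed.
Lemma int1 : integral (1 : K).
Proof. by have := int_int 1. Qed.
Lemma int_exp (x : K) k : integral x -> integral (x ^+ k).
Proof.
by move=> hx; elim: k => [|k IH]; [rewrite expr0; apply: int1 | rewrite exprS; apply: int_mul].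
Qed.

Lemma in_loc_addI (c y r : K) : integral c -> integral r -> in_loc c y -> in_loc c (y + r).
Proof.
move=> hc hr [n hn]; exists n; rewrite mulrDr; apply: int_add => //.
by apply: int_mul => //; apply: int_exp.
Qed.

Lemma in_loc_subI (c y r : K) : integral c -> integral r -> in_loc c y -> in_loc c (y - r).
Proof.
move=> hc hr [n hn]; exists n; rewrite mulrBr; apply: int_sub => //.
by apply: int_mul => //; apply: int_exp.
Qed.

Definition cop (a b : K) := exists p q, integral p /\ integral q /\ p * a + q * b = 1.

Lemma cop_sym a b : cop a b -> cop b a.
Proof. by move=> [p [q [hp [hq e]]]]; exists q, p; split => //; split => //; rewrite addrC. Qed.

Lemma cop_mulr a b1 b2 : integral b1 -> cop a b1 -> cop a b2 -> cop a (b1 * b2).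
Proof.
move=> hb1 [p1 [q1 [hp1 [hq1 e1]]]] [p2 [q2 [hp2 [hq2 e2]]]].
exists (p1 + q1 * b1 * p2), (q1 * q2); split.
  by apply: int_add => //; apply: int_mul => //; apply: int_mul.
split; first by apply: int_mul.
have E : (p1 * (p2 * a + q2 * b2) + q1 * b1 * p2) * a + q1 * q2 * (b1 * b2) =
   (p1 * a + q1 * b1) * (p2 * a + q2 * b2) by ring.
by rewrite e2 !mulr1 in E; rewrite E.
Qed.

Lemma cop_expl a b k : integral a -> cop a b -> cop (a ^+ k) b.
Proof.
move=> ha hab; elim: k => [|k IH].
  by rewrite expr0; exists 1, 0; split; [apply: int1|split; [apply: int0| rewrite mul1r mul0r addr0]].
rewrite exprS; apply: cop_sym; apply: cop_mulr => //; apply: cop_sym => //.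
Qed.

End Integ.

Lemma root_bound (F : numFieldType) (q : {poly F}) (z : F) :
  q \is monic -> root q z -> `|z| <= 1 + \sum_(m < size q) `|q`_m|.
Proof.
move=> mq rq.
have S0 : 0 <= \sum_(m < size q) `|q`_m| by apply: sumr_ge0 => m _.
case: (real_leP (normr_real z) (real1 F)) => hz.
  by apply: (le_trans hz); rewrite lerDl.
have [n0 szq] : exists n, size q = n.+1.
  by exists (size q).-1; rewrite prednK // lt0n size_poly_eq0 monic_neq0.
have lq : q`_n0 = 1 by move: mq => /monicP; rewrite /lead_coef szq.
move: rq; rewrite /root horner_coef szq big_ord_recr /= lq.
rewrite mul1r addrC addr_eq0 => /eqP Ez.
case: n0 Ez szq lq => [|n] Ez szq lq.
  by move: Ez; rewrite big_ord0 expr0 oppr0 => /eqP; rewrite oner_eq0.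
have hz0 : 0 < `|z| by apply: lt_trans hz.
have key : `|z| ^+ n.+1 <= (\sum_(m < n.+1) `|q`_m|) * `|z| ^+ n.
  rewrite -normrX Ez normrN mulr_suml.
  apply: (le_trans (ler_norm_sum _ _ _)); apply: ler_sum => m _.
  rewrite normrM normrX; apply: ler_wpM2l => //.
  by rewrite ler_eXn2l // -ltnS.
have : `|z| <= \sum_(m < n.+1) `|q`_m|.
  by move: key; rewrite exprS ler_pM2r // exprn_gt0.
move=> h; apply: (le_trans h); rewrite [X in _ <= 1 + X]big_ord_recr /=.
by rewrite addrCA lerDl addr_ge0.
Qed.

Lemma denom (K : fieldExtType rat) (e : K) :
  exists d : rat, d != 0 /\ integral (in_alg K d * e).
Proof.
have [/polyOver1P[p Dp] mp] := (minPolyOver 1 e, monic_minPoly 1 e).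
have re : root (map_poly (in_alg K) p) e by rewrite -Dp root_minPoly.
rewrite Dp map_monic in mp.
have [n szp] : exists n, size p = n.+1.
  by exists (size p).-1; rewrite prednK // lt0n size_poly_eq0 monic_neq0.
have lp : p`_n = 1 by move: mp => /monicP; rewrite /lead_coef szp.
pose dz : int := \prod_(m < n.+1) denq p`_m.
pose d : rat := dz%:~R.
have dn0 : d != 0.
  by rewrite /d intr_eq0; apply/prodf_neq0 => m _; apply: denq_neq0.
have hint (m : 'I_n.+1) : p`_m * d \is a Num.int.
  rewrite /d /dz (bigD1 m) //= intrM mulrA -numqE.
  by apply: rpredM; apply: intr_int.
pose P : {poly rat} := \poly_(m < n.+1) (p`_m * d ^+ (n - m)).
have PZ : P \is a polyOver Num.int.
  apply/polyOverP => m; rewrite coef_poly; case: ifP => hm; last exact: rpred0.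
  case: (ltngtP m n) => hmn.
  - have -> : (n - m = (n - m).-1.+1)%N by rewrite prednK // subn_gt0.
    rewrite exprS mulrA; apply: rpredM; first exact: (hint (Ordinal hm)).
    by apply: rpredX; apply: intr_int.
  - by move: hm; rewrite ltnS leqNgt hmn.
  - by rewrite hmn subnn expr0 mulr1 lp; apply: rpred1.
have mP : P \is monic.
  by rewrite monicE lead_coef_poly //= subnn expr0 mulr1 lp.
have rP : root (map_poly (in_alg K) P) (in_alg K d * e).
  have hs : (size (map_poly (in_alg K) P) <= n.+1)%N.
    by rewrite size_map_poly size_poly.
  rewrite /root (horner_coef_wide _ hs).
  have hs' : (size (map_poly (in_alg K) p) <= n.+1)%N by rewrite size_map_poly szp.
  move: re; rewrite /root (horner_coef_wide _ hs') => /eqP re0.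
  have re : \sum_(m < n.+1) (in_alg K) p`_m * e ^+ m = 0.
    apply: etrans re0; apply: eq_bigr => m _; by rewrite coef_map.
  rewrite (eq_bigr (fun m : 'I_n.+1 => in_alg K d ^+ n * ((in_alg K) p`_m * e ^+ m))).
    by rewrite -mulr_sumr re mulr0.
  move=> m _; rewrite !coef_map coef_poly ltn_ord /= -!in_algE.
  have hm : (m <= n)%N by rewrite -ltnS.
  have -> : in_alg K d ^+ n = in_alg K d ^+ (n - m) * in_alg K d ^+ m.
    by rewrite -exprD subnK.
  rewrite rmorphM rmorphXn exprMn.
  by ring.
have [pz Epz] := floorpP PZ.
exists d; split => //; exists pz; split.
  rewrite monicE; move: mP; rewrite monicE Epz (lead_coef_map_inj (@intr_inj rat)) //.
  by move=> /eqP h; apply/eqP; apply: (@intr_inj rat); rewrite h.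
move: rP; rewrite Epz -map_poly_comp; congr (root _ _); apply: eq_map_poly => z /=.
by rewrite -in_algE rmorph_int.
Qed.

Lemma int_bound (K : fieldExtType rat) (b : K) : integral b ->
  exists M : algC, 0 <= M /\ forall s : {rmorphism K -> algC}, `|s b| <= M.
Proof.
move=> [p [mp rp]].
pose q : {poly algC} := map_poly intr p.
exists (1 + \sum_(m < size q) `|q`_m|); split.
  by apply: addr_ge0 => //; apply: sumr_ge0 => m _.
move=> s; apply: root_bound; first exact: monic_map.
have -> : q = map_poly s (map_poly (fun z : int => z%:~R : K) p).
  rewrite -map_poly_comp; apply: eq_map_poly => z /=; by rewrite rmorph_int.
by rewrite /root horner_map (rootP rp) rmorph0.
Qed.

Lemma reduce (K : fieldExtType rat) : exists C : algC, 0 < C /\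
  forall y : K, exists rho, integral rho /\
    forall s : {rmorphism K -> algC}, `|s (y - rho)| < C.
Proof.
pose n := \dim (fullv : {vspace K}); pose e := vbasis (fullv : {vspace K}).
have [d hd] := fin_all_exists (fun i : 'I_n => denom _ e`_i).
have hb i : integral (in_alg K (d i) * e`_i) := (hd i).2.
have [M hM] := fin_all_exists (fun i => @int_bound _ _ (hb i)).
exists (1 + \sum_i M i); split.
  apply: (lt_le_trans ltr01); rewrite lerDl; apply: sumr_ge0 => i _; exact: (hM i).1.
move=> y; pose c i := coord e i y / d i.
exists (\sum_i ((Num.floor (c i))%:~R * (in_alg K (d i) * e`_i))); split.
  apply: (big_ind (@integral K)) => //; first exact: int0.
    by move=> u v; apply: int_add.
  by move=> i _; apply: int_mul => //; apply: int_int.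
move=> s.
have Ey : y = \sum_i in_alg K (c i) * (in_alg K (d i) * e`_i).
  rewrite {1}(coord_vbasis (memvf y)); apply: eq_bigr => i _.
  by rewrite mulrA -rmorphM /c divfK ?(hd i).1 // -mulr_algl.
rewrite {1}Ey -sumrB.
rewrite (eq_bigr (fun i => (c i - (Num.floor (c i))%:~R) *: (in_alg K (d i) * e`_i))); last first.
  by move=> i _; rewrite -(rmorph_int (in_alg K)) -mulrBl -rmorphB in_algE mulr_algl.
rewrite rmorph_sum; apply: (le_lt_trans (ler_norm_sum _ _ _)).
apply: (le_lt_trans (y := \sum_i M i)); last by rewrite ltrDr ltr01.
apply: ler_sum => i _; rewrite rmorphZ_num normrM.
have [fl1 fl2] := andP (floor_itv (c i)).
have h0 : 0 <= ratr (c i - (Num.floor (c i))%:~R) :> algC by rewrite ler0q; lra.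
have h1 : ratr (c i - (Num.floor (c i))%:~R) <= 1 :> algC.
  rewrite -(rmorph1 (ratr : {rmorphism rat -> algC})) ler_rat.
  by move: fl2; rewrite intrD; lra.
rewrite ger0_norm //; rewrite -[M i]mul1r; apply: ler_pM => //.
exact: (hM i).2.
Qed.

Lemma bern (e : algC) n : 0 <= e -> 1 + n%:R * e <= (1 + e) ^+ n.
Proof.
move=> e0; elim: n => [|n IH]; first by rewrite mul0r addr0 expr0.
rewrite exprSr; apply: (le_trans (y := (1 + n%:R * e) * (1 + e))).
  rewrite -subr_ge0.
  have -> : (1 + n%:R * e) * (1 + e) - (1 + n.+1%:R * e) = n%:R * (e * e).
    by rewrite -addn1 natrD; ring.
  by apply: mulr_ge0 => //; apply: mulr_ge0.
by apply: ler_wpM2r => //; apply: addr_ge0.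
Qed.

Lemma bounded_overconv (K : fieldExtType rat) (g : nat -> K) (C : algC) :
  (forall n, normK_lt (g n) C) -> overconv g.
Proof.
move=> hg e e0.
pose N := Num.Def.archi_bound (`|C| / e).
exists N => n hn s.
have h := hg n s.
have C0 : 0 < C by apply: le_lt_trans h.
have hx := archi_boundP (divr_ge0 (normr_ge0 C) (ltW e0)).
have hx' : C < N%:R * e by rewrite -{1}(gtr0_norm C0) -ltr_pdivrMr.
apply: ltW; apply: (lt_trans h); apply: (lt_le_trans hx').
apply: (le_trans (y := 1 + n%:R * e)); last exact: bern (ltW e0).
apply: (le_trans (y := n%:R * e)).
  by apply: ler_wpM2r; [exact: ltW | rewrite ler_nat].
by rewrite lerDr ler01.
Qed.

Lemma in_loc0 (K : fieldExtType rat) (c : K) : in_loc c 0.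
Proof. by exists 0%N; rewrite mulr0; apply: int0. Qed.

Lemma coef_split (K : fieldExtType rat) (C : algC) (C0 : 0 < C)
  (hC : forall y : K, exists rho, integral rho /\
          forall s : {rmorphism K -> algC}, `|s (y - rho)| < C)
  (I : finType) (one : I) (a : I -> K) (hint : forall i, integral (a i))
  (hcop : forall i j, i != j ->
       exists u v : K, integral u /\ integral v /\ u * a i + v * a j = 1)
  (i : I) (x : K) : in_loc (aJ a setT) x ->
  exists gh : K * K, [/\ x = gh.1 + gh.2, in_loc (a i) gh.1,
     in_loc (aJ a (setT :\ i)) gh.2, (x = 0 -> gh.1 = 0 /\ gh.2 = 0)
     & ((i = one -> normK_lt gh.2 C) /\ (i != one -> normK_lt gh.1 C))].
Proof.
move=> hx.
have nC0 : normK_lt (0 : K) C by move=> s; rewrite rmorph0 normr0.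
case: (eqVneq x 0) => [->|xn0].
  by exists (0, 0); split => //=; rewrite ?addr0 //; apply: in_loc0.
set A := a i; set B := aJ a (setT :\ i).
have hA : integral A by apply: hint.
have [hB cAB] : integral B /\ cop A B.
  apply: (big_ind (fun b => integral b /\ cop A b)).
  - split; first exact: int1.
    exists 0, 1; split; first exact: int0.
    by split; [exact: int1 | rewrite mul0r mul1r add0r].
  - by move=> u v [hu cu] [hv cv]; split; [apply: int_mul | apply: cop_mulr].
  - move=> j; rewrite in_setD1 => /andP [ji _]; split => //.
    have [u [v [hu [hv E]]]] := hcop i j ltac:(by rewrite eq_sym).
    by exists u, v.
have EAB : aJ a setT = A * B by rewrite /aJ (big_setD1 i) ?in_setT.
move: hx; rewrite EAB => -[k hk].
have [al [be [hal [hbe E]]]] : cop (A ^+ k) (B ^+ k).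
  apply: cop_sym; apply: cop_expl; first exact: hB.
  by apply: cop_sym; apply: cop_expl.
pose y := be * B ^+ k * x; pose z := al * A ^+ k * x.
have Ex : x = y + z.
  transitivity ((al * A ^+ k + be * B ^+ k) * x); first by rewrite E mul1r.
  by rewrite /y /z; ring.
have ly : in_loc A y.
  exists k; have -> : A ^+ k * y = be * ((A * B) ^+ k * x) by rewrite /y exprMn; ring.
  by apply: int_mul.
have lz : in_loc B z.
  exists k; have -> : B ^+ k * z = al * ((A * B) ^+ k * x) by rewrite /z exprMn; ring.
  by apply: int_mul.
have xn : x = 0 -> False by move=> h; move: xn0; rewrite h eqxx.
case: (eqVneq i one) => [io|io].
- have [rho [hr hs]] := hC z.
  exists (y + rho, z - rho); split => //=; first by rewrite Ex; ring.
  all: first [by apply: in_loc_addI | by apply: in_loc_subI | by move=> /xn | idtac].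
- have [rho [hr hs]] := hC y.
  exists (y - rho, z + rho); split => //=; first by rewrite Ex; ring.
  all: first [by apply: in_loc_addI | by apply: in_loc_subI | by move=> /xn | idtac].
  by split => // h; move: io; rewrite h eqxx.
Qed.

Theorem proposition2p16 (K : fieldExtType rat) :
  exists C1 : algC, 0 < C1 /\
  forall (I : finType) (one : I) (a : I -> K),
    (forall i : I, integral (a i) /\ a i != 0 /\ ~ Runit (a i)) ->
    (forall i j : I, i != j ->
       exists u v : K, integral u /\ integral v /\ u * a i + v * a j = 1) ->
    forall (f : nat -> K) (i : I), inD one a [set: I] f ->
    exists g h : nat -> K,
      inD one a [set i] g /\ inD one a ([set: I] :\ i) h /\
      (forall n : nat, f n = g n + h n) /\ tle g f /\ tle h f /\
      (i = one -> forall n : nat, normK_lt (h n) C1) /\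
      (i != one -> forall n : nat, normK_lt (g n) C1).
Proof.
have [C [C0 hC]] := reduce K.
exists C; split => // I one a ha hcop f i [hf _].
have hint j : integral (a j) by have [] := ha j.
have H n := @coef_split K C C0 hC I one a hint hcop i (f n) (hf n).
pose F n := proj1_sig (constructive_indefinite_description _ (H n)).
have HF n : _ := proj2_sig (constructive_indefinite_description _ (H n)).
exists (fun n => (F n).1), (fun n => (F n).2).
have ha1 : aJ a [set i] = a i by rewrite /aJ big_set1.
split.
  split; first by move=> n; rewrite ha1; have [] := HF n.
  rewrite in_set1 => io; apply: (@bounded_overconv K _ C) => n.
  by have [_ _ _ _ [_ h2]] := HF n; apply: h2; rewrite eq_sym.
split.
  split; first by move=> n; have [] := HF n.
  rewrite in_setD1 in_setT andbT negbK => /eqP io.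
  apply: (@bounded_overconv K _ C) => n.
  by have [_ _ _ _ [h1 _]] := HF n; apply: h1.
split; first by move=> n; have [] := HF n.
split; first by move=> n hn; have [_ _ _ hz _] := HF n; have [] := hz (hn n (leqnn n)).
split; first by move=> n hn; have [_ _ _ hz _] := HF n; have [] := hz (hn n (leqnn n)).
split.
  by move=> io n; have [_ _ _ _ [h1 _]] := HF n; apply: h1.
by move=> io n; have [_ _ _ _ [_ h2]] := HF n; apply: h2.
Qed.
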